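(* Let $n\ge 1$, let $x_1,\dots,x_n$ be distinct integers each greater than $1$, and let $D=\{1,0,x_1,\dots,x_n\}$. Then $\sigma(D)=4-n+\sum_{i=1}^n x_i$.
   Context: A signed tree is a pair $(T,s)$ where $T$ is a finite tree and $s:E(T)\to\{+,-\}$. The signed degree $sdeg(v)$ of a vertex is the number of incident positive edges minus the number of incident negative edges. $(T,s)$ realizes (satisfies) a set $D$ of integers if $D=\{sdeg(v):v\in V(T)\}$. For a set $D$ containing $1$ or $-1$, $\sigma(D)=\min\{|V(T)|: \text{some signed tree }(T,s)\text{ realizes }D\}$. *)

(* Defs.v *)
From mathcomp Require Import all_boot all_order all_algebra.
Set Implicit Arguments. Unset Strict Implicit. Unset Printing Implicit Defensive.
Import Order.TTheory GRing.Theory Num.Theory.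

Definition simple_graph (V : finType) (e : rel V) : Prop :=
  symmetric e /\ irreflexive e.

Definition has_cycle (V : finType) (e : rel V) : Prop :=
  exists c : seq V, [/\ 3 <= size c, uniq c & cycle e c].

Definition is_tree (V : finType) (e : rel V) : Prop :=
  [/\ simple_graph e, (forall x y : V, connect e x y) & ~ has_cycle e].

(* A sign on the edges, encoded as a symmetric boolean function on pairs
   of vertices (true = '+', false = '-'); only its values on edges matter. *)
Definition edge_sign (V : finType) (s : V -> V -> bool) : Prop :=
  forall x y, s x y = s y x.

Definition sdeg (V : finType) (e : rel V) (s : V -> V -> bool) (v : V) : int :=
  (#|[set u | e v u && s v u]|%:Z - #|[set u | e v u && ~~ s v u]|%:Z)%R.

Definition realizes (V : finType) (e : rel V) (s : V -> V -> bool)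
  (D : seq int) : Prop :=
  forall z : int, z \in D <-> exists v : V, sdeg e s v = z.

Definition signed_tree_realizing (D : seq int) (V : finType) (e : rel V)
  (s : V -> V -> bool) : Prop :=
  [/\ is_tree e, edge_sign s & realizes e s D].

Definition is_sigma (D : seq int) (k : nat) : Prop :=
  (exists (V : finType) (e : rel V) (s : V -> V -> bool),
      signed_tree_realizing D e s /\ #|V| = k) /\
  (forall (V : finType) (e : rel V) (s : V -> V -> bool),
      signed_tree_realizing D e s -> k <= #|V|).

(* Main.v *)
Require Import Defs.
From mathcomp Require Import all_boot all_order all_algebra.
From mathcomp Require Import zify.
Import Order.TTheory GRing.Theory Num.Theory.
Set Implicit Arguments. Unset Strict Implicit. Unset Printing Implicit Defensive.

Lemma leaf_ex (V : finType) (e : rel V) : symmetric e -> irreflexive e ->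
  ~ has_cycle e -> forall S : {set V}, S != set0 ->
  exists2 v, v \in S & #|[set u in S | e v u]| <= 1.
Proof.
move=> esym eirr nocyc S /set0Pn [v0 v0S].
case: (boolP [exists v in S, #|[set u in S | e v u]| <= 1]).
  by move=> /exists_inP [v vS Hv]; exists v.
rewrite negb_exists_in => /forall_inP Hdeg.
have key : forall k h t, #|V| - size (h :: t) < k -> uniq (h :: t) ->
    path e h t -> all (fun w => w \in S) (h :: t) -> False.
  elim=> [//|k IH] h t Hk Hu Hp Ha.
  have hS : h \in S by move: Ha => /= /andP [].
  have Hd := Hdeg h hS; rewrite -ltnNge in Hd.
  set A := [set u in S | e h u] in Hd.
  have : 0 < #|A :\ head h t|.
    move: Hd; rewrite (cardsD1 (head h t) A); case: (head h t \in A) => /=; lia.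
  rewrite card_gt0 => /set0Pn [u]; rewrite !inE => /andP [uy /andP [uS ehu]].
  case: (boolP (u \in h :: t)) => [uin | unin].
    have uh : u != h by apply: contraTneq ehu => ->; rewrite eirr.
    move: uin; rewrite in_cons (negbTE uh) /= => ut.
    case/splitPr: ut Hu Hp uy => t1 t2 Hu Hp uy.
    have t1n : t1 != [::] by case: t1 Hu Hp uy => //=; rewrite eqxx.
    apply: nocyc; exists (h :: rcons t1 u); split.
    - by rewrite /= size_rcons; case: t1 t1n {Hu Hp uy}.
    - apply: subseq_uniq Hu; rewrite -cats1 /=.
      by rewrite eqxx; apply: cat_subseq => //; rewrite sub1seq mem_head.
    - rewrite /= rcons_path last_rcons esym ehu andbT.
      move: Hp; rewrite cat_path /= rcons_path => /andP [-> /andP [-> _]] //.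
  apply: (IH u (h :: t)).
  - have Hu' : uniq (u :: h :: t) by rewrite cons_uniq unin Hu.
    have := (elimT card_uniqP Hu'); have := max_card (mem (u :: h :: t)).
    move=> H1 H2; rewrite H2 /= in H1; move: Hk H1 => /=; lia.
  - by rewrite cons_uniq unin Hu.
  - by rewrite /= esym ehu Hp.
  - by rewrite /= uS.
case: (key #|V|.+1 v0 [::]) => //=; first lia.
by rewrite v0S.
Qed.

Lemma forest_bound (V : finType) (e : rel V) : symmetric e -> irreflexive e ->
  ~ has_cycle e -> forall S : {set V}, S != set0 ->
  \sum_(v in S) #|[set u in S | e v u]| + 2 <= 2 * #|S|.
Proof.
move=> esym eirr nocyc S.
have [k] := ubnP #|S|; elim: k S => // k IH S HS S0.
have [v vS Hv] := leaf_ex esym eirr nocyc S0.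
set S' := S :\ v.
have cS : #|S| = (#|S'|).+1 by rewrite (cardsD1 v S) vS.
have dv : #|[set u in S | e v u]| = #|[set u in S' | e v u]|.
  rewrite (cardsD1 v) !inE eirr andbF /=; apply: eq_card => w.
  by rewrite !inE; case: (w == v).
have dw : forall w, #|[set u in S | e w u]| = (e v w : nat) + #|[set u in S' | e w u]|.
  move=> w; rewrite (cardsD1 v) !inE vS /= esym; congr (_ + _); apply: eq_card => y.
  by rewrite !inE; case: (y == v).
have X : \sum_(w in S') (e v w : nat) = #|[set u in S' | e v u]|.
  rewrite -sum1_card big_mkcond [RHS]big_mkcond /=.
  by apply: eq_bigr => w _; rewrite in_set; case: (w \in S'); case: (e v w).
rewrite (big_setD1 v vS) /= -/S'.
under eq_bigr => w _ do rewrite dw.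
rewrite big_split /= X dv.
have Y1 : #|[set u in S' | e v u]| <= 1 by rewrite -dv.
case: (boolP (S' == set0)) => [/eqP S'0 | S'n].
  have -> : #|[set u in S' | e v u]| = 0.
    by rewrite S'0; apply: eq_card0 => w; rewrite !inE.
  rewrite S'0 big_set0 cS; lia.
have := IH S' _ S'n; rewrite cS in HS.
have : #|S'| < k by lia.
move=> h /(_ h) H; rewrite cS; lia.
Qed.

Lemma tree_nbr (V : finType) (e : rel V) (w0 w1 : V) : is_tree e -> w0 != w1 ->
  forall v, exists u, e v u.
Proof.
move=> [_ con _] w01 v.
have [y yv] : exists y, y != v.
  case: (boolP (w0 == v)) => [/eqP <- | ]; first by exists w1; rewrite eq_sym.
  by exists w0.
case/connectP: (con v y) => [[|a p]] /= Hp Hy; first by rewrite Hy eqxx in yv.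
by exists a; case/andP: Hp.
Qed.

Lemma lower_bound (n : nat) (x : 'I_n -> int) :
  injective x -> (forall i, (1 < x i)%R) ->
  forall (V : finType) (e : rel V) (s : V -> V -> bool),
  signed_tree_realizing ([:: 1%R; 0%R] ++ [seq x i | i <- enum 'I_n]) e s ->
  (4%:Z - n%:Z + \sum_(i < n) x i <= (#|V|)%:Z)%R.
Proof.
move=> xinj x1 V e s [tr ssym real].
have [[esym eirr] con nocyc] := tr.
pose pos v := #|[set u | e v u && s v u]|.
pose neg v := #|[set u | e v u && ~~ s v u]|.
have sdE : forall v, sdeg e s v = ((pos v)%:Z - (neg v)%:Z)%R by [].
have [w0 w0d] : exists w0, sdeg e s w0 = 0%R by apply/real; rewrite !inE eqxx orbT.
have [w1 w1d] : exists w1, sdeg e s w1 = 1%R by apply/real; rewrite !inE eqxx.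
have w01 : w0 != w1 by apply/eqP => E; move: w0d; rewrite E w1d.
have nbr := tree_nbr tr w01.
have degE : forall v, #|[set u in [set: V] | e v u]| = pos v + neg v.
  move=> v; rewrite -(cardsID [set u | s v u]) /pos /neg; congr (_ + _); apply: eq_card => u;
  by rewrite !inE; case: (s v u); case: (e v u).
have posge : forall v, (1 <= pos v)%N.
  move=> v; have : sdeg e s v \in [:: 1%R; 0%R] ++ [seq x i | i <- enum 'I_n].
    by apply/real; exists v.
  rewrite sdE !inE => /orP [/eqP H | /orP [/eqP H | /mapP [i _ H]]].
  - lia.
  - have [u evu] := nbr v.
    have : (0 < pos v + neg v)%N.
      by rewrite -degE card_gt0; apply/set0Pn; exists u; rewrite !inE.
    lia.
  - have := x1 i; rewrite -H; lia.
have gP : forall i, exists v, sdeg e s v = x i.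
  by move=> i; apply/real; rewrite !inE; apply/orP; right; apply/orP; right;
     apply: map_f; rewrite mem_enum.
pose g i := odflt w0 [pick v | sdeg e s v == x i].
have gE : forall i, sdeg e s (g i) = x i.
  move=> i; rewrite /g; case: pickP => [v /eqP //|H].
  by have [v Hv] := gP i; move: (H v); rewrite Hv eqxx.
have ginj : injective g by move=> i j gij; apply: xinj; rewrite -gE gij gE.
pose X i := `|x i|%N.
have xX : forall i, x i = ((X i)%:Z)%R.
  by move=> i; rewrite /X; have := x1 i; case: (x i).
set I := [set g i | i in 'I_n].
have cI : #|I| = n by rewrite card_imset // card_ord.
have S1 : (\sum_(i < n) X i + (#|V| - n) <= \sum_v pos v)%N.
  rewrite (eq_bigl (fun v => v \in [set: V])); last by move=> v; rewrite inE.
  rewrite (big_setID I) /= setTI.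
  have -> : \sum_(i in [set: V] :\: I) pos i = \sum_(i in ~: I) pos i.
    by apply: eq_bigl => v; rewrite !inE andbT.
  apply: leq_add.
    rewrite big_imset /=; last by move=> i j _ _; apply: ginj.
    apply: leq_sum => i _; have := gE i; rewrite sdE xX; lia.
  have <- : #|~: I| = #|V| - n by rewrite -cI -(cardsC I); lia.
  by rewrite -sum1_card; apply: leq_sum => v _; apply: posge.
have S2 : (2 <= \sum_v neg v)%N.
  have nw0 : (0 < neg w0)%N.
    have := posge w0; have := w0d; rewrite sdE; lia.
  move: (nw0); rewrite card_gt0 => /set0Pn [u]; rewrite !inE => /andP [ew0u sw0u].
  have uw0 : u != w0 by apply: contraTneq ew0u => ->; rewrite eirr.
  have nu : (0 < neg u)%N.
    by rewrite card_gt0; apply/set0Pn; exists w0; rewrite !inE esym ssym ew0u sw0u.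
  rewrite (bigD1 w0) //= (bigD1 u) //=; lia.
have S3 := forest_bound esym eirr nocyc (S:=[set: V]) _.
have : [set: V] != set0 by apply/set0Pn; exists w0; rewrite inE.
move/S3; rewrite cardsT.
under eq_bigr => v _ do rewrite degE.
rewrite big_split /= => S4.
have -> : (\sum_(i < n) x i = (\sum_(i < n) X i)%:Z)%R.
  by rewrite (big_morph Posz PoszD (erefl (Posz 0))); apply: eq_bigr => i _; exact: xX.
have : (\sum_(i < n) X i + 4 <= #|V| + n)%N.
  have E1 : \sum_(i in [set: V]) pos i = \sum_v pos v by apply: eq_bigl => v; rewrite inE.
  have E2 : \sum_(i in [set: V]) neg i = \sum_v neg v by apply: eq_bigl => v; rewrite inE.
  have nV : (n <= #|V|)%N by rewrite -cI max_card.
  move: S1 S2 S4; rewrite E1 E2; move: (\sum_(i < n) X i) (\sum_v pos v) (\sum_v neg v) => a b c; move: #|V| nV => m nV H1 H2 H3. lia.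
move: (\sum_(i < n) X i) #|V| => a m; lia.
Qed.

Definition pe (V : finType) (z : V) (p : V -> V) : rel V :=
  fun u v => ((u != z) && (p u == v)) || ((v != z) && (p v == u)).

Lemma seq_max (T : eqType) (r : T -> nat) (c : seq T) (a : T) :
  a \in c -> exists2 v, v \in c & forall y, y \in c -> r y <= r v.
Proof.
elim: c a => [//|h t IH] a _.
case: t IH => [|h' t'] IH.
  by exists h; rewrite ?mem_head // => y; rewrite inE => /eqP ->.
have [v vt Hv] := IH h' (mem_head h' t').
case: (leqP (r h) (r v)) => H.
  exists v; first by rewrite in_cons vt orbT.
  by move=> y; rewrite in_cons => /orP [/eqP -> | /Hv].
exists h; first by rewrite mem_head.
move=> y; rewrite in_cons => /orP [/eqP -> // | /Hv]; lia.
Qed.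

Lemma pe_tree (V : finType) (z : V) (p : V -> V) (r : V -> nat) :
  p z = z -> (forall v, v != z -> r (p v) < r v) -> is_tree (pe z p).
Proof.
move=> pz pr.
have esym : symmetric (pe z p) by move=> u v; rewrite /pe orbC.
have eirr : irreflexive (pe z p).
  move=> v; rewrite /pe orbb; apply/negP => /andP [vz /eqP pv].
  by have := pr v vz; rewrite pv ltnn.
have toz : forall v, connect (pe z p) v z.
  move=> v; have [k] := ubnP (r v); elim: k v => // k IH v Hv.
  case: (boolP (v == z)) => [/eqP -> // | vz].
  apply: connect_trans (connect1 _) (IH (p v) _).
    by rewrite /pe vz eqxx.
  by have := pr v vz; lia.
split=> //.
  move=> x y; apply: connect_trans (toz x) _.
  by rewrite (sym_connect_sym esym); apply: toz.
case=> c [c3 cu cc].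
have c0 : c != [::] by case: c c3 {cu cc}.
have [a ac] : exists a, a \in c by case: c c0 {c3 cu cc} => // a ? _; exists a; rewrite mem_head.
have [v vc Hv] := seq_max r ac.
case: (rot_to vc) => i c' Hrot.
have : cycle (pe z p) (v :: c') by rewrite -Hrot rot_cycle.
have : uniq (v :: c') by rewrite -Hrot rot_uniq.
have : 3 <= size (v :: c') by rewrite -Hrot size_rot.
have Hin : forall y, y \in v :: c' -> r y <= r v by move=> y; rewrite -Hrot mem_rot; apply: Hv.
clear Hrot; case: c' Hin => [|a1 [|t0 t1]] //= Hin _ Hu.
rewrite rcons_path /= => /and3P [e1 _ /andP [_ e2]].
have pva : forall y, y \in a1 :: t0 :: t1 -> pe z p v y -> p v = y.
  move=> y yin; rewrite /pe => /orP [/andP [_ /eqP] // | /andP [yz /eqP pyv]].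
  have := Hin y; rewrite in_cons yin orbT => /(_ isT).
  have := pr y yz; rewrite pyv => H2 H1; by rewrite leqNgt H2 in H1.
have h1 := pva a1 (mem_head _ _) e1.
have e2' : pe z p v (last t0 t1) by move: e2; rewrite [pe _ _ _ v]esym.
have h2 : p v = last t0 t1.
  by apply: pva e2'; rewrite in_cons mem_last orbT.
move: Hu; rewrite h1 in h2.
have : a1 \in t0 :: t1 by rewrite h2 mem_last.
by move=> -> /and3P [].
Qed.

Lemma pe_card (V : finType) (z : V) (p : V -> V) (r : V -> nat) (P : pred V) v :
  p z = z -> (forall v, v != z -> r (p v) < r v) ->
  #|[set u | pe z p v u && P u]| =
  ((v != z) && P (p v)) + #|[set u | (u != z) && (p u == v) && P u]|.
Proof.
move=> pz pr.
rewrite (cardsD1 (p v)) inE.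
have -> : pe z p v (p v) = (v != z).
  rewrite /pe eqxx andbT; case: (boolP (v == z)) => [/eqP -> | //].
  by rewrite pz eqxx.
congr (_ + _); apply: eq_card => u; rewrite !inE /pe.
case: (boolP (u == z)) => [/eqP -> | uz] /=.
  by rewrite orbF eq_sym; case: (p v == z); rewrite ?andbF.
case: (boolP (u == p v)) => [/eqP upv | upv] /=; last first.
  by rewrite [p v == u]eq_sym (negbTE upv) andbF.
case: (boolP (p u == v)) => [/eqP puv | //]; exfalso.
have H1 := pr u uz; rewrite puv in H1.
case: (boolP (v == z)) => [/eqP vz | vz].
  by move: uz; rewrite upv vz pz eqxx.
have := pr v vz; rewrite -upv => H2.
by rewrite ltnNge (ltnW H1) in H2.
Qed.

Definition VT {K : nat} (b : 'I_K.+1 -> nat) : finType :=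
  ('I_4 + {i : 'I_K.+1 & 'I_(b i).+1})%type.

Definition sp {K} (b : 'I_K.+1 -> nat) (k : nat) : VT b := inl (inord k).

Definition cv {K} (b : 'I_K.+1 -> nat) (i : 'I_K.+1) : VT b :=
  if (i : nat) is j.+1 then inr (Tagged (fun i => 'I_(b i).+1) (@ord0 (b (inord j))))
  else sp b 3.

Definition par {K} (b : 'I_K.+1 -> nat) (v : VT b) : VT b :=
  match v with inl k => sp b (k.-1) | inr w => cv b (tag w) end.

Definition rk {K} (b : 'I_K.+1 -> nat) (v : VT b) : nat :=
  match v with inl k => k | inr w => 4 + tag w + tagged w end.

Definition sg {K} (b : 'I_K.+1 -> nat) (u v : VT b) : bool :=
  ~~ (((u == sp b 1) && (v == sp b 2)) || ((u == sp b 2) && (v == sp b 1))).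

Definition isc {K} (b : 'I_K.+1 -> nat) (v : VT b) : bool :=
  match v with inl k => (k : nat) == 3 | inr w => ((tagged w : nat) == 0) && (tag w < K) end.

Arguments VT {K} b. Arguments sp {K} b k. Arguments cv {K} b i. Arguments par {K} b v.
Arguments rk {K} b v. Arguments sg {K} b u v. Arguments isc {K} b v.

Lemma sp_eq K (b : 'I_K.+1 -> nat) (k l : nat) : k < 4 -> l < 4 -> (sp b k == sp b l) = (k == l).
Proof.
move=> hk hl; apply/eqP/eqP => [[] | -> //].
by move/(congr1 val); rewrite /= !inordK.
Qed.

Lemma par_z K (b : 'I_K.+1 -> nat) : par b (sp b 0) = sp b 0.
Proof. by rewrite /= inordK. Qed.

Lemma rk_par K (b : 'I_K.+1 -> nat) (v : VT b) : v != sp b 0 -> rk b (par b v) < rk b v.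
Proof.
case: v => [k | [i j]] /=.
  rewrite /sp /rk => hk; rewrite inordK; last by have := ltn_ord k; lia.
  have : (k : nat) != 0 by apply: contra hk => /eqP h; apply/eqP; rewrite /sp; congr inl; apply/val_inj; rewrite /= inordK // h.
  lia.
move=> _; case: i j => [[|i'] hi] j /=.
  by rewrite /sp inordK.
rewrite inordK; lia.
Qed.

Lemma cv_inj K (b : 'I_K.+1 -> nat) : injective (cv b).
Proof.
move=> [[|i] hi] [[|j] hj] //=; rewrite /cv /=.
  by move=> _; apply: val_inj.
move=> H; have := congr1 (fun v : VT b => if v is inr w then val (tag w) else 0) H.
rewrite /= !inordK; [| lia | lia].
by move=> h; apply: val_inj => /=; rewrite h.
Qed.

Lemma cv_sp K (b : 'I_K.+1 -> nat) i k : k < 3 -> (cv b i == sp b k) = false.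
Proof.
move=> hk; case: i => [[|i] hi] //=; rewrite /cv /=.
by rewrite sp_eq //; lia.
Qed.

Lemma isc_cv K (b : 'I_K.+1 -> nat) i : isc b (cv b i).
Proof.
case: i => [[|i] hi] //=; rewrite /cv /=; first by rewrite /sp /= inordK.
by rewrite inordK //; lia.
Qed.

Lemma cv_isc K (b : 'I_K.+1 -> nat) v : isc b v -> exists i, v = cv b i.
Proof.
case: v => [k | [i j]] /=.
  move=> /eqP hk; exists ord0; rewrite /cv /= /sp; congr inl; apply: val_inj.
  by rewrite /= inordK // hk.
move=> /andP [/eqP j0 iK]; exists (inord i.+1).
rewrite /cv inordK /=; last by lia.
rewrite inord_val; congr inr; congr Tagged; exact: val_inj.
Qed.

Lemma ch_cv K (b : 'I_K.+1 -> nat) i u :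
  (u != sp b 0) && (par b u == cv b i) = (if u is inr w then tag w == i else false).
Proof.
case: u => [k | w] /=.
  by rewrite [sp b _ == _]eq_sym cv_sp ?andbF //; have := ltn_ord k; lia.
exact: (inj_eq (@cv_inj K b)).
Qed.

Lemma ch_sp K (b : 'I_K.+1 -> nat) k u : k < 3 ->
  (u != sp b 0) && (par b u == sp b k) = (u == sp b k.+1).
Proof.
move=> hk; case: u => [l | w] /=.
  have hl := ltn_ord l.
  have E : forall m, m < 4 -> (inl l == sp b m) = ((l : nat) == m).
    move=> m hm; rewrite /sp; apply/eqP/eqP => [[h] | h].
      by rewrite h inordK.
    by congr inl; apply: val_inj; rewrite /= inordK // h.
  rewrite E; last lia.
  rewrite E //.
  rewrite sp_eq; lia.
by rewrite cv_sp.
Qed.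

Lemma leaf_nopar K (b : 'I_K.+1 -> nat) w u : ~~ isc b (inr w) ->
  (u != sp b 0) && (par b u == inr w) = false.
Proof.
move=> hv; case: u => [k | w'] /=; first by rewrite andbF.
apply/negbTE; apply: contra hv => /eqP <-; exact: isc_cv.
Qed.

Lemma card_block K (b : 'I_K.+1 -> nat) i :
  #|[set u : VT b | if u is inr w then tag w == i else false]| = (b i).+1.
Proof.
have -> : [set u : VT b | if u is inr w then tag w == i else false] =
    [set (inr (Tagged (fun i => 'I_(b i).+1) j) : VT b) | j : 'I_(b i).+1].
  apply/setP => u; rewrite inE; case: u => [k | [i' j]] /=.
    by apply/esym/imsetP => [[j _ H]].
  case: (boolP (i' == i)) => [/eqP E | ne].
    by subst i'; apply/esym/imsetP; exists j.
  apply/esym/imsetP => [[j' _ H]]; move/negP: ne; apply.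
  by have := congr1 (fun v : VT b => if v is inr w then tag w else i) H => /= ->.
rewrite card_imset ?card_ord //.
move=> j1 j2 H.
have := congr1 (fun v : VT b => if v is inr w then tagged_as (Tagged (fun i => 'I_(b i).+1) j1) w else j1) H.
by rewrite /= !tagged_asE.
Qed.

Lemma pcard K (b : 'I_K.+1 -> nat) (v : VT b) (P : pred (VT b)) :
  #|[set u | pe (sp b 0) (par b) v u && P u]| =
  ((v != sp b 0) && P (par b v)) + #|[set u | (u != sp b 0) && (par b u == v) && P u]|.
Proof. exact: (pe_card P v (par_z b) (@rk_par K b)). Qed.

Lemma card_ch1 K (b : 'I_K.+1 -> nat) (v a : VT b) (P : pred (VT b)) :
  (forall u, (u != sp b 0) && (par b u == v) = (u == a)) ->
  #|[set u | (u != sp b 0) && (par b u == v) && P u]| = P a.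
Proof.
move=> H; case: (boolP (P a)) => Pa.
  transitivity #|[set a]|; last by rewrite cards1.
  apply: eq_card => u; rewrite !inE H.
  by case: (boolP (u == a)) => [/eqP -> | ] //=.
apply: eq_card0 => u; rewrite !inE H.
by case: (boolP (u == a)) => [/eqP -> | ] //=; rewrite (negbTE Pa).
Qed.

Lemma sdeg_ns K (b : 'I_K.+1 -> nat) (v : VT b) : v != sp b 1 -> v != sp b 2 ->
  sdeg (pe (sp b 0) (par b)) (sg b) v =
  (((v != sp b 0) + #|[set u | (u != sp b 0) && (par b u == v)]|)%:Z)%R.
Proof.
move=> h1 h2; have sT : forall u, sg b v u = true by move=> u; rewrite /sg (negbTE h1) (negbTE h2).
rewrite /sdeg (pcard v (sg b v)) (pcard v (fun u => ~~ sg b v u)) !sT andbT andbF /=.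
have -> : #|[set u | (u != sp b 0) && (par b u == v) && ~~ sg b v u]| = 0.
  by apply: eq_card0 => u; rewrite !inE sT andbF.
rewrite subr0; congr (Posz (_ + _)); apply: eq_card => u.
by rewrite !inE sT andbT.
Qed.

Lemma par_sp K (b : 'I_K.+1 -> nat) k : k < 4 -> par b (sp b k) = sp b k.-1.
Proof. by move=> hk; rewrite /= inordK. Qed.

Lemma sg_sp K (b : 'I_K.+1 -> nat) k l : k < 4 -> l < 4 ->
  sg b (sp b k) (sp b l) = ~~ ((k == 1) && (l == 2) || (k == 2) && (l == 1)).
Proof. by move=> hk hl; rewrite /sg !sp_eq. Qed.


Lemma sdeg_cv K (b : 'I_K.+1 -> nat) i :
  sdeg (pe (sp b 0) (par b)) (sg b) (cv b i) = ((b i).+2%:Z)%R.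
Proof.
rewrite sdeg_ns ?cv_sp //=.
have -> : #|[set u | (u != sp b 0) && (par b u == cv b i)]| = (b i).+1.
  by rewrite -(card_block b i); apply: eq_card => u; rewrite !inE ch_cv.
by [].
Qed.

Lemma sdeg_sp0 K (b : 'I_K.+1 -> nat) :
  sdeg (pe (sp b 0) (par b)) (sg b) (sp b 0) = 1%R.
Proof.
rewrite sdeg_ns ?sp_eq // eqxx /=.
have -> : #|[set u | (u != sp b 0) && (par b u == sp b 0)]| = 1.
  by rewrite -(cards1 (sp b 1)); apply: eq_card => u; rewrite !inE ch_sp.
by [].
Qed.

Lemma sdeg_leaf K (b : 'I_K.+1 -> nat) w : ~~ isc b (inr w) ->
  sdeg (pe (sp b 0) (par b)) (sg b) (inr w) = 1%R.
Proof.
move=> hw; rewrite sdeg_ns //.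
have -> : #|[set u | (u != sp b 0) && (par b u == inr w)]| = 0.
  by apply: eq_card0 => u; rewrite !inE leaf_nopar.
by [].
Qed.

Lemma sdeg_sp1 K (b : 'I_K.+1 -> nat) :
  sdeg (pe (sp b 0) (par b)) (sg b) (sp b 1) = 0%R.
Proof.
rewrite /sdeg (pcard (sp b 1) (sg b (sp b 1))) (pcard (sp b 1) (fun u => ~~ sg b (sp b 1) u)).
rewrite !(card_ch1 _ (fun u => ch_sp u (isT : 1 < 3))) par_sp // !sg_sp // sp_eq //.
Qed.

Lemma sdeg_sp2 K (b : 'I_K.+1 -> nat) :
  sdeg (pe (sp b 0) (par b)) (sg b) (sp b 2) = 0%R.
Proof.
rewrite /sdeg (pcard (sp b 2) (sg b (sp b 2))) (pcard (sp b 2) (fun u => ~~ sg b (sp b 2) u)).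
rewrite !(card_ch1 _ (fun u => ch_sp u (isT : 2 < 3))) par_sp // !sg_sp // sp_eq //.
Qed.

Lemma upper K (b : 'I_K.+1 -> nat) :
  signed_tree_realizing ([:: 1%R; 0%R] ++ [seq ((b i).+2%:Z)%R | i <- enum 'I_K.+1])
    (pe (sp b 0) (par b)) (sg b) /\ #|VT b| = 4 + \sum_i (b i).+1.
Proof.
split; last by rewrite /VT card_sum card_ord tagnat.card.
split.
- exact: (pe_tree (par_z b) (@rk_par K b)).
- by move=> u v; rewrite /sg; case: (u == sp b 1); case: (u == sp b 2); case: (v == sp b 1); case: (v == sp b 2).
move=> z; split.
  rewrite !inE => /orP [/eqP -> | /orP [/eqP -> | /mapP [i _ ->]]].
  - by exists (sp b 0); rewrite sdeg_sp0.
  - by exists (sp b 1); rewrite sdeg_sp1.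
  - by exists (cv b i); rewrite sdeg_cv.
move=> [v <-].
have inD : forall i, ((b i).+2%:Z)%R \in [:: 1%R; 0%R] ++ [seq ((b i).+2%:Z)%R | i <- enum 'I_K.+1].
  by move=> i; rewrite mem_cat; apply/orP; right; apply: map_f; rewrite mem_enum.
case: (boolP (isc b v)) => [/cv_isc [i ->] | nc].
  by rewrite sdeg_cv.
case: v nc => [k | w] nc; last by rewrite sdeg_leaf.
have -> : inl k = sp b k by rewrite /sp; congr inl; apply: val_inj; rewrite /= inordK.
case: k nc => [[|[|[|[|k]]]] hk] //= nc.
- by rewrite sdeg_sp0.
- by rewrite sdeg_sp1.
- by rewrite sdeg_sp2.
Qed.
Unset Implicit Arguments.

Theorem mainTheorem12 (n : nat) (x : 'I_n -> int) :
  (1 <= n)%N -> injective x -> (forall i, (1 < x i)%R) ->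
  exists k : nat,
    is_sigma ([:: 1%R; 0%R] ++ [seq x i | i <- enum 'I_n]) k /\
    (k%:Z = 4%:Z - n%:Z + \sum_(i < n) x i)%R.
Proof.
case: n x => [//|K] x _ xinj x1.
pose b i := (`|x i| - 2)%N.
have xb : forall i, x i = ((b i).+2%:Z)%R.
  move=> i; have := x1 i; rewrite /b; case: (x i) => [m|m] h //=; lia.
have Deq : [seq x i | i <- enum 'I_K.+1] = [seq ((b i).+2%:Z)%R | i <- enum 'I_K.+1].
  by apply: eq_map.
have [Hup Hcard] := upper b.
have Hsum : (\sum_(i < K.+1) x i = (\sum_(i < K.+1) (b i).+1)%N%:Z + K.+1%:Z)%R.
  rewrite (eq_bigr (fun i => ((b i).+2%:Z)%R)); last by move=> i _; rewrite xb.
  rewrite -(big_morph Posz PoszD (erefl (Posz 0))) -PoszD; congr Posz.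
  transitivity (\sum_(i < K.+1) ((b i).+1 + 1))%N.
    by apply: eq_bigr => i _; rewrite addn1.
  by rewrite big_split /= sum1_card card_ord.
have Hk : ((#|VT b|)%:Z = 4%:Z - K.+1%:Z + \sum_(i < K.+1) x i)%R.
  rewrite Hsum Hcard; move: (\sum_(i < K.+1) (b i).+1)%N => a; lia.
exists #|VT b|; split => //.
split.
  by exists (VT b), (pe (sp b 0) (par b)), (sg b); rewrite Deq.
move=> V e s H.
have := lower_bound xinj x1 H; rewrite -Hk.
by move: #|VT b| #|V| => a c; lia.
Qed.
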